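(* Let $n\ge1$, $0<\rho<1$, $\varepsilon>0$, and consider $$x_k - C_n^1\rho\, x_{k-1} + C_n^2\rho^2 x_{k-2} - \dots + (-1)^n\rho^n x_{k-n}=v_k,\qquad k=n,n+1,\dots,$$ (characteristic polynomial $(\lambda-\rho)^n$), with initial conditions $x^{(0)}=(x_0,\dots,x_{n-1})$. Fix $t\ge n$. Then the maximum of $x_t$ over all $x^{(0)}$ with $\|x^{(0)}\|_\infty\le1$ and all sequences with $|v_k|\le\varepsilon$ ($k=n,\dots,t$) is attained at $x^{(0)}=((-1)^{n-1},\dots,-1,1)$ (i.e. $x_i=(-1)^{n-1-i}$) and $v_k=\varepsilon$ for $k=n,\dots,t$, and equals $$\alpha_{t,n}+\varepsilon\sum_{k=n}^{t}C_{t-k+n-1}^{n-1}\rho^{t-k},$$ which is strictly less than $\alpha_n+\varepsilon(1-\rho)^{-n}$.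
   Context: $C_p^q=\frac{p!}{q!(p-q)!}$. For $k\ge n$, $\alpha_{k,n}=\sum_{i=0}^{n-1}|P_i(k)|\rho^{k-i}$ where $P_i(k)=\prod_{j\in\{0,\dots,n-1\},j\ne i}\frac{k-j}{i-j}$, and $\alpha_n=\max_{k\ge n}\alpha_{k,n}$. *)

(* Defs.v *)
From HB Require Import structures.
From mathcomp Require Import all_boot all_order all_algebra.
Set Implicit Arguments. Unset Strict Implicit. Unset Printing Implicit Defensive.
Import Order.TTheory GRing.Theory Num.Theory.
Local Open Scope ring_scope.

Definition lagP {R : realFieldType} (n i k : nat) : R :=
  \prod_(j < n | (j : nat) != i) ((k%:R - (j : nat)%:R) / (i%:R - (j : nat)%:R)).

Definition alpha_kn {R : realFieldType} (rho : R) (k n : nat) : R :=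
  \sum_(i < n) `|lagP n i k| * rho ^+ (k - i).

Definition is_alpha_n {R : realFieldType} (rho : R) (n : nat) (a : R) : Prop :=
  (exists2 k, (n <= k)%N & a = alpha_kn rho k n) /\
  (forall k, (n <= k)%N -> alpha_kn rho k n <= a).

Definition recur {R : realFieldType} (n : nat) (rho : R) (x v : nat -> R) (t : nat) : Prop :=
  forall k, (n <= k)%N -> (k <= t)%N ->
    \sum_(j < n.+1) (-1) ^+ j * ('C(n, j))%:R * rho ^+ j * x (k - j)%N = v k.

Definition max_value {R : realFieldType} (n : nat) (rho eps : R) (t : nat) : R :=
  alpha_kn rho t n +
  eps * \sum_(n <= k < t.+1) ('C(t - k + n - 1, n - 1))%:R * rho ^+ (t - k).

(* Main.v *)
Require Import Defs.
From HB Require Import structures.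
From mathcomp Require Import all_boot all_order all_algebra.
From mathcomp Require Import ring lra zify.
Import Order.TTheory GRing.Theory Num.Theory.
Local Open Scope ring_scope.


Section SA.
Variable R : realFieldType.

Lemma size_XsubC1 : size ('X - (1:R)%:P) = 2%N.
Proof. by rewrite size_XsubC. Qed.

Lemma size_delta (p : {poly R}) : (size (p - comp_poly ('X - 1%:P) p)%R <= (size p).-1)%N.
Proof.
have [->|pn0] := eqVneq p 0.
  by rewrite comp_poly0 subr0 size_poly0.
apply/leq_sizeP => j hj.
have hs : size (comp_poly ('X - 1%:P) p) = size p by rewrite size_comp_poly2 // size_XsubC1.
rewrite coefB.
have [hjs|hjs] := leqP (size p) j.
  by rewrite (nth_default _ hjs) (nth_default 0 (_ : (size (comp_poly ('X - 1%:P) p) <= j)%N)) ?hs // subrr.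
have -> : j = (size p).-1.
  by apply/eqP; rewrite eqn_leq hj -ltnS (leq_trans hjs) // leqSpred.
have := lead_coef_comp p (q := 'X - 1%:P); rewrite size_XsubC1 => /(_ isT).
rewrite lead_coefXsubC expr1n mulr1 /lead_coef hs => ->; by rewrite subrr.
Qed.

Lemma fd n (p : {poly R}) (a : R) : (size p <= n)%N ->
  \sum_(j < n.+1) (-1)^+j * ('C(n,j))%:R * p.[a - j%:R] = 0.
Proof.
elim: n p a => [|n IH] p a hp.
  move: hp; rewrite leqn0 size_poly_eq0 => /eqP ->.
  by rewrite big1 // => j _; rewrite horner0 mulr0.
set q := p - (comp_poly ('X - 1%:P) p).
have hq : (size q <= n)%N by have := size_delta p; rewrite -/q; lia.
have := IH q a hq.
have hqv : forall y, q.[y] = p.[y] - p.[y - 1].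
  by move=> y; rewrite /q hornerD hornerN horner_comp hornerXsubC.
under eq_bigr => j _ do rewrite hqv mulrBr -addrA -mulNr.
rewrite big_split /= => h; rewrite -[RHS]h.
rewrite big_ord_recl /= expr0 bin0 mul1r subr0.
rewrite [X in _ = X + _]big_ord_recl /= expr0 bin0 mul1r subr0 -addrA; apply: (congr1 (+%R _)).
have -> : \sum_(i < n) (-1) ^+ bump 0 i * ('C(n, bump 0 i))%:R * p.[a - (bump 0 i)%:R]
   = \sum_(i < n.+1) (-1) ^+ i.+1 * ('C(n, i.+1))%:R * p.[a - (i.+1)%:R].
  by rewrite [RHS]big_ord_recr /= bin_small // mulr0 mul0r addr0.
rewrite -big_split; apply: eq_bigr => j _ /=.
rewrite binS natrD /bump /= add1n exprS.
have -> : a - (j.+1)%:R = a + (1 *- j - 1) by rewrite -addn1 natrD opprD -mulNrn.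
ring.
Qed.
End SA.


Section SB.
Variable R : realFieldType.

Lemma count_neq n i : (i < n)%N -> count (fun j => j != i) (iota 0 n) = n.-1.
Proof.
move=> hi; have h1 := count_predC (pred1 i) (iota 0 n).
have h2 : count (pred1 i) (iota 0 n) = 1%N.
  by have := count_uniq_mem i (iota_uniq 0 n); rewrite mem_iota /= hi; apply.
rewrite size_iota h2 in h1.
rewrite (eq_count (a2 := predC (pred1 i))) //; lia.
Qed.

Lemma lagP_poly n i : (i < n)%N -> exists2 P : {poly R}, (size P <= n)%N &
  forall k : nat, lagP n i k = P.[k%:R].
Proof.
move=> hi.
set F := [seq j <- index_iota 0 n | j != i].
exists ((\prod_(j <- F) (i%:R - j%:R)^-1) *: \prod_(j <- F) ('X - (j%:R)%:P)).
  apply: leq_trans (size_scale_leq _ _) _.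
  by rewrite size_prod_XsubC size_filter count_neq //; lia.
move=> k; rewrite hornerZ horner_prod /lagP.
have -> : \prod_(j < n | (j:nat) != i) ((k%:R - (j:nat)%:R) / (i%:R - (j:nat)%:R))
   = \prod_(j <- F) ((k%:R - j%:R) / (i%:R - j%:R)) :> R by rewrite big_filter big_mkord.
rewrite -big_split /=; apply: eq_bigr => j _.
by rewrite hornerXsubC mulrC.
Qed.

Lemma lagP_small n i m : (i < n)%N -> (m < n)%N -> lagP n i m = (i == m)%:R :> R.
Proof.
move=> hi hm; rewrite /lagP.
have [<-|him] := eqVneq i m.
  rewrite big1 // => j hj; rewrite divff // subr_eq0 eqr_nat eq_sym; exact: hj.
rewrite (bigD1 (Ordinal hm)) /=; last by rewrite eq_sym.
by rewrite subrr mul0r mul0r.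
Qed.

Definition Hp p : {poly R} :=
  ((p`!)%:R)^-1 *: \prod_(0 <= i < p) ('X - (- (i.+1)%:R)%:P).

Lemma size_Hp p : (size (Hp p) <= p.+1)%N.
Proof.
rewrite /Hp; apply: leq_trans (size_scale_leq _ _) _; by rewrite size_prod_XsubC /index_iota subn0 size_iota.
Qed.

Lemma prod_bin m p : (\prod_(0 <= i < p) (m + i.+1) = 'C(m + p, p) * p`!)%N.
Proof.
elim: p => [|p IH]; first by rewrite big_nil bin0 fact0.
rewrite big_nat_recr //= IH factS.
have := mul_bin_diag (m + p.+1) p; rewrite addnS /= => h.
nia.
Qed.

Lemma Hp_nat p m : (Hp p).[m%:R] = ('C(m + p, p))%:R.
Proof.
rewrite hornerZ horner_prod.
have -> : \prod_(0 <= i < p) ('X - (- (i.+1)%:R)%:P).[m%:R] = (\prod_(0 <= i < p) (m + i.+1))%:R :> R.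
  rewrite natr_prod; apply: eq_bigr => i _; by rewrite hornerXsubC opprK natrD.
rewrite prod_bin natrM mulrC -mulrA divff ?mulr1 //.
by rewrite pnatr_eq0 -lt0n fact_gt0.
Qed.

Lemma Hp_neg p e : (0 < e)%N -> (e <= p)%N -> (Hp p).[- e%:R] = 0.
Proof.
move=> he hep; rewrite hornerZ horner_prod (bigD1_seq e.-1) ?iota_uniq //=.
  by rewrite hornerXsubC prednK // subrr mul0r mulr0.
by rewrite mem_iota; lia.
Qed.
End SB.


Section SC.
Variable R : realFieldType.

Lemma conv n d : (1 <= n)%N ->
  \sum_(j < n.+1) (-1)^+j * ('C(n,j))%:R *
     (if (j <= d)%N then ('C(d - j + n - 1, n - 1))%:R else 0) = (d == 0%N)%:R :> R.
Proof.
move=> hn; case: d => [|d].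
  rewrite big_ord_recl /= subn0 add0n binn mulr1 expr0 bin0 !mul1r big1 ?addr0 //.
  by move=> j _; rewrite mulr0.
have hs := size_Hp R n.-1; rewrite prednK // in hs.
rewrite /= -[RHS](@fd R n _ d.+1%:R hs).
apply: eq_bigr => j _; congr (_ * _).
have hj := ltn_ord j.
have [hjd|hjd] := leqP j d.+1.
  rewrite -natrB // Hp_nat; congr (_%:R); congr ('C(_, _)); lia.
have -> : d.+1%:R - j%:R = - ((j - d.+1)%N%:R) :> R by rewrite natrB ?opprB //; lia.
rewrite Hp_neg //; lia.
Qed.

Variable rho : R.
Hypothesis rho0 : rho != 0.

Definition gsol n (c : nat -> R) m := \sum_(i < n) lagP n i m * (rho ^+ m / rho ^+ i) * c i.

Lemma gsol_small n c m : (m < n)%N -> gsol n c m = c m.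
Proof.
move=> hm; rewrite /gsol (bigD1 (Ordinal hm)) //= lagP_small // eqxx mul1r.
rewrite divff ?expf_neq0 // mul1r big1 ?addr0 // => i hi.
rewrite lagP_small //; case: eqP => [h|]; last by rewrite !mul0r.
by move: hi; rewrite -(inj_eq val_inj) /= h eqxx.
Qed.

Lemma gsol_rec n c K : (n <= K)%N ->
  \sum_(j < n.+1) (-1)^+j * ('C(n,j))%:R * rho^+j * gsol n c (K - j) = 0.
Proof.
move=> hK.
rewrite (eq_bigr (fun j : 'I_n.+1 => \sum_(i < n) (rho^+K / rho^+i * c i) *
     ((-1)^+j * ('C(n,j))%:R * lagP n i (K - j)))); last first.
  move=> j _; rewrite /gsol big_distrr; apply: eq_bigr => i _ /=.
  have hj := ltn_ord j.
  have -> : rho ^+ K = rho ^+ j * rho ^+ (K - j) by rewrite -exprD subnKC //; lia.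
  ring.
rewrite exchange_big big1 // => i _; rewrite -big_distrr /=.
have [P hP hPv] := @lagP_poly R n i (ltn_ord i).
have -> : \sum_(j < n.+1) (-1)^+j * ('C(n,j))%:R * lagP n i (K - j) = 0 :> R.
  rewrite -[RHS](@fd R n P K%:R hP); apply: eq_bigr => j _; rewrite hPv natrB //.
  have := ltn_ord j; lia.
by rewrite mulr0.
Qed.
End SC.


Section SD.
Variable R : realFieldType.
Variable rho : R.

Definition ysol n t (v : nat -> R) m :=
  \sum_(k < t.+1 | (n <= k <= m)%N) ('C(m - k + n - 1, n - 1))%:R * rho^+(m-k) * v k.

Lemma ysol_small n t v m : (m < n)%N -> ysol n t v m = 0.
Proof. by move=> hm; rewrite /ysol big1 // => k hk; lia. Qed.

Lemma ysol_rec n t v K : (1 <= n)%N -> (n <= K)%N -> (K <= t)%N ->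
  \sum_(j < n.+1) (-1)^+j * ('C(n,j))%:R * rho^+j * ysol n t v (K - j) = v K.
Proof.
move=> hn hK hKt.
rewrite (eq_bigr (fun j : 'I_n.+1 => \sum_(k < t.+1) (if (n <= k <= K)%N then
   rho^+(K-k) * v k * ((-1)^+j * ('C(n,j))%:R *
     (if (j <= K - k)%N then ('C(K - k - j + n - 1, n - 1))%:R else 0)) else 0))); last first.
  move=> j _; rewrite /ysol big_distrr big_mkcond /=; apply: eq_bigr => k _.
  have hj := ltn_ord j.
  have [h1|h1] := boolP (n <= k <= K - j)%N.
    have h2 : (n <= k <= K)%N by lia.
    have h3 : (j <= K - k)%N by lia.
    rewrite h2 h3 (subnAC K j k).
    have -> : rho ^+ (K - k) = rho ^+ j * rho ^+ (K - k - j) by rewrite -exprD subnKC.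
    ring.
  case: ifP => // h2; have h3 : (K - k < j)%N by lia.
  by rewrite leqNgt h3 /= !mulr0.
rewrite exchange_big /=.
rewrite (eq_bigr (fun k : 'I_t.+1 => if (n <= k <= K)%N then
    rho^+(K-k) * v k * ((K - k == 0)%N)%:R else 0)); last first.
  move=> k _; case: ifP => hc; last by rewrite big1.
  by rewrite -big_distrr /= conv.
rewrite (bigD1 (Ordinal (leq_ltn_trans hKt (ltnSn t)))) //= big1.
  by rewrite hK leqnn /= subnn expr0 mul1r eqxx mulr1 addr0.
move=> k hk; case: ifP => // h2.
have -> : (K - k == 0)%N = false.
  apply/negbTE; move: hk; rewrite -(inj_eq val_inj) /=; lia.
by rewrite mulr0.
Qed.

Lemma uniq_rec n x z v t : (forall i, (i < n)%N -> x i = z i) ->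
  recur n rho x v t -> recur n rho z v t -> forall m, (m <= t)%N -> x m = z m.
Proof.
move=> h0 hx hz m; elim/ltn_ind: m => m IH hm.
have [hmn|hmn] := ltnP m n; first exact: h0.
have := hx m hmn hm; rewrite -(hz m hmn hm) => /eqP; rewrite -subr_eq0 -sumrB.
rewrite big_ord_recl /= subn0 expr0 bin0 !mulr1 mul1r big1.
  by rewrite mul1r addr0 subr_eq0 => /eqP.
move=> j _; rewrite IH ?subrr //; rewrite /bump /=; have := ltn_ord j; lia.
Qed.
End SD.


Section SE.
Variable R : realFieldType.
Variable rho : R.
Hypothesis rho0 : 0 < rho.

Lemma rhon0 : rho != 0. Proof. by rewrite gt_eqF. Qed.

Lemma rec_sum n t c v : (1 <= n)%N ->
  recur n rho (fun m => gsol R rho n c m + ysol R rho n t v m) v t.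
Proof.
move=> hn K hK hKt.
under eq_bigr => j _ do rewrite mulrDr.
by rewrite big_split /= gsol_rec ?rhon0 // add0r ysol_rec.
Qed.

Lemma sol n x v t : (1 <= n)%N -> recur n rho x v t ->
  x t = gsol R rho n x t + ysol R rho n t v t.
Proof.
move=> hn hx.
apply: (@uniq_rec R rho n x (fun m => gsol R rho n x m + ysol R rho n t v m) v t) => //.
  by move=> i hi; rewrite gsol_small ?rhon0 // ysol_small // addr0.
exact: rec_sum.
Qed.

Lemma sign_prod i d :
  \prod_(j < i.+1 + d) (if (j:nat) != i then (if (i < j)%N then -1 else 1) else 1) = (-1) ^+ d :> R.
Proof.
elim: d => [|d IH].
  rewrite addn0 big1 // => j _; have := ltn_ord j.
  by case: ifP => // h1; case: ifP => //; lia.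
rewrite addnS big_ord_recr /= IH.
have -> : (i.+1 + d != i)%N by lia.
by rewrite (_ : (i < i.+1 + d)%N) ?exprS ?mulrN1 ?mulN1r //; lia.
Qed.

Lemma lagP_sign n i t : (i < n)%N -> (n <= t)%N ->
  lagP n i t * (-1) ^+ (n - 1 - i) = `|lagP n i t| :> R.
Proof.
move=> hi ht.
have hs : (-1) ^+ (n - 1 - i) = \prod_(j < n | (j:nat) != i) (if (i < j)%N then -1 else 1) :> R.
  rewrite big_mkcond /=.
  have -> : n = (i.+1 + (n - 1 - i))%N by lia.
  by rewrite sign_prod; congr (_ ^+ _); lia.
have hpos : 0 <= lagP (R:=R) n i t * (-1) ^+ (n - 1 - i).
  rewrite hs /lagP -big_split /=; apply: prodr_ge0 => j hj.
  have hjn := ltn_ord j.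
  have htj : 0 < t%:R - (j:nat)%:R :> R by rewrite subr_gt0 ltr_nat; lia.
  case: ltnP => hij.
    rewrite mulrN1 -mulrN -invrN opprB; apply: divr_ge0; first exact: ltW.
    by rewrite subr_ge0 ler_nat; lia.
  rewrite mulr1; apply: divr_ge0; first exact: ltW.
  by rewrite subr_ge0 ler_nat; lia.
by rewrite -(ger0_norm hpos) normrM normr_sign mulr1.
Qed.
End SE.


Section SF.
Variable R : realFieldType.
Variable rho : R.
Hypothesis rho0 : 0 < rho.
Hypothesis rho1 : rho < 1.

Definition U p M := \sum_(m < M.+1) ('C(m + p, p))%:R * rho^+m.

Lemma U_id p M : (1 - rho) * U p.+1 M = U p M - ('C(M + p.+1, p.+1))%:R * rho^+M.+1.
Proof.
rewrite /U; elim: M => [|M IH].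
  by rewrite !big_ord_recr !big_ord0 /= !add0n !binn expr0 expr1; ring.
rewrite big_ord_recr /= mulrDr IH [in RHS]big_ord_recr /=.
have e : 'C(M.+1 + p.+1, p.+1) = ('C(M + p.+1, p.+1) + 'C(M.+1 + p, p))%N.
  by rewrite addSn binS addnS.
rewrite e natrD !exprS; ring.
Qed.

Lemma geom M : (1 - rho) * \sum_(m < M.+1) rho^+m = 1 - rho^+M.+1.
Proof.
elim: M => [|M IH]; first by rewrite big_ord_recr big_ord0 /= expr0 expr1; ring.
by rewrite big_ord_recr /= mulrDr IH !exprS; ring.
Qed.

Lemma U_lt p M : U p M * (1 - rho)^+p.+1 < 1.
Proof.
have h1 : 0 < 1 - rho by rewrite subr_gt0.
elim: p => [|p IH].
  rewrite /U expr1 mulrC.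
  under eq_bigr => m _ do rewrite addn0 bin0 mul1r.
  rewrite geom; have := exprn_gt0 M.+1 rho0; lra.
rewrite exprS mulrA [U _ _ * _]mulrC U_id.
have hc : 0 <= ('C(M + p.+1, p.+1))%:R * rho^+M.+1 * (1 - rho)^+p.+1.
  by apply: mulr_ge0; [apply: mulr_ge0 => //; apply: exprn_ge0; exact: ltW|apply: exprn_ge0; exact: ltW].
rewrite mulrBl; lra.
Qed.

Lemma reindex n t : (1 <= n)%N -> (n <= t)%N ->
  \sum_(n <= k < t.+1) ('C(t - k + n - 1, n - 1))%:R * rho ^+ (t - k) = U (n - 1) (t - n).
Proof.
move=> hn ht.
rewrite big_nat_rev /= -{1}(add0n n) big_addn.
have -> : U (n - 1) (t - n) = \sum_(0 <= m < (t - n).+1) ('C(m + (n - 1), n - 1))%:R * rho^+m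
  by rewrite /U big_mkord.
have -> : (t.+1 - n = (t - n).+1)%N by lia.
apply: eq_big_nat => m hm.
have -> : (t - (0 + n + t.+1 - (m + n).+1) = m)%N by lia.
congr (('C(_, _))%:R * _); lia.
Qed.
End SF.


Section SG.
Variable R : realFieldType.

Lemma pow_bound (x : R) n : 0 <= x -> x <= 1 -> (1 + x) ^+ n <= 1 + 3%:R ^+ n * x.
Proof.
move=> h0 h1; elim: n => [|n IH]; first by rewrite !expr0 mul1r; lra.
have hc : 1 <= 3%:R ^+ n :> R by apply: exprn_ege1; lra.
have hx2 : x * x <= x by nra.
rewrite exprSr exprS.
have h : (1 + x) ^+ n * (1 + x) <= (1 + 3%:R ^+ n * x) * (1 + x).
  by apply: ler_wpM2r => //; lra.
apply: le_trans h _; nra.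
Qed.

Lemma eventually_max (f : nat -> R) n N : (n <= N)%N ->
  (forall k, (N <= k)%N -> f k.+1 <= f k) ->
  exists2 k0, (n <= k0)%N & forall k, (n <= k)%N -> f k <= f k0.
Proof.
move=> hN hmono.
have H1 : forall d, exists k0, (n <= k0 <= n + d)%N /\
    forall k, (n <= k <= n + d)%N -> f k <= f k0.
  elim=> [|d [k0 [hk0 IH]]].
    exists n; split; first by rewrite addn0 leqnn.
    by move=> k hk; have -> : k = n by lia.
  have [h|h] := lerP (f (n + d.+1)) (f k0).
    exists k0; split; first lia.
    move=> k hk; have [hk'|hk'] := leqP k (n + d); first by apply: IH; lia.
    by have -> : k = (n + d.+1)%N by lia.
  exists (n + d.+1)%N; split; first lia.
  move=> k hk; have [hk'|hk'] := leqP k (n + d).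
    by apply: le_trans (IH k _) (ltW h); lia.
  by have -> : k = (n + d.+1)%N by lia.
have [k0 [hk0 Hk0]] := H1 (N - n)%N.
exists k0; first lia.
have HN : forall e, f (N + e)%N <= f N.
  elim=> [|e IH]; first by rewrite addn0.
  by rewrite addnS; apply: le_trans (hmono _ _) IH; lia.
move=> k hk; have [hkN|hkN] := leqP k N; first by apply: Hk0; lia.
have -> : k = (N + (k - N))%N by lia.
by apply: le_trans (HN _) (Hk0 _ _); lia.
Qed.

Variable rho : R.
Hypothesis rho0 : 0 < rho.

Lemma alpha_step n k : (1 <= n)%N -> (n <= k)%N ->
  rho * (1 + 3%:R ^+ n / ((k - n).+1)%:R) <= 1 ->
  alpha_kn rho k.+1 n <= alpha_kn rho k n.
Proof.
move=> hn hk hrho; rewrite /alpha_kn; apply: ler_sum => i _.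
have hi := ltn_ord i.
set m := ((k - n).+1)%:R : R.
have hm : 0 < m by rewrite ltr0n.
set Q := \prod_(j < n | (j:nat) != i) ((k.+1%:R - (j:nat)%:R) / (k%:R - (j:nat)%:R)) : R.
have hL : lagP n i k.+1 = lagP n i k * Q :> R.
  rewrite /lagP /Q -big_split /=; apply: eq_bigr => j _.
  have hj := ltn_ord j.
  have hkj : k%:R - (j:nat)%:R != 0 :> R by rewrite subr_eq0 eqr_nat; lia.
  by rewrite [RHS]mulrC -mulrA mulKf.
have hQ0 : 0 <= Q.
  apply: prodr_ge0 => j _; have hj := ltn_ord j.
  apply: divr_ge0; rewrite subr_ge0 ler_nat; lia.
have hQ : Q <= (1 + m^-1) ^+ n.
  have -> : (1 + m^-1) ^+ n = \prod_(j < n) (1 + m^-1) by rewrite prodr_const card_ord.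
  rewrite /Q big_mkcond /=.
  apply: ler_prod => j _; have hj := ltn_ord j.
  have hm1 : 0 <= m^-1 by rewrite invr_ge0 ltW.
  case: ifP => _; last by rewrite ler01 /= lerDl.
  have hkj : 0 < k%:R - (j:nat)%:R :> R by rewrite subr_gt0 ltr_nat; lia.
  have -> : (k.+1%:R - (j:nat)%:R) / (k%:R - (j:nat)%:R) = 1 + (k%:R - (j:nat)%:R)^-1 :> R.
    rewrite -addn1 natrD (addrC _ 1) -addrA mulrDl divff ?gt_eqF //.
    by rewrite addrC mul1r.
  apply/andP; split; first by apply: addr_ge0 => //; rewrite invr_ge0 ltW.
  rewrite lerD2l lef_pV2 ?posrE //.
  by rewrite /m -natrB ?ler_nat; lia.
have hB : (1 + m^-1) ^+ n <= 1 + 3%:R ^+ n / m.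
  apply: pow_bound; first by rewrite invr_ge0 ltW.
  by rewrite invf_le1 // ler1n.
have hpow : rho ^+ (k.+1 - i) = rho ^+ (k - i) * rho by rewrite subSn ?exprSr //; lia.
rewrite hL hpow normrM (ger0_norm hQ0).
have hrQ : rho * Q <= 1.
  apply: le_trans hrho; apply: ler_wpM2l; first exact: ltW.
  exact: le_trans hQ hB.
have hA : 0 <= `|lagP n i k| * rho ^+ (k - i) :> R.
  by apply: mulr_ge0 => //; apply: exprn_ge0; exact: ltW.
have -> : `|lagP n i k| * Q * (rho ^+ (k - i) * rho) = (`|lagP n i k| * rho ^+ (k - i)) * (rho * Q) :> R by ring.
by rewrite ler_piMr.
Qed.
End SG.


Theorem theorem2p3 (R : archiRealFieldType) (n : nat) (rho eps : R) (t : nat)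
  (hn : (1 <= n)%N) (hrho0 : 0 < rho) (hrho1 : rho < 1) (heps : 0 < eps)
  (ht : (n <= t)%N) :
  (* upper bound over all admissible data *)
  (forall x v : nat -> R,
     (forall i, (i < n)%N -> `|x i| <= 1) ->
     (forall k, (n <= k)%N -> (k <= t)%N -> `|v k| <= eps) ->
     recur n rho x v t ->
     x t <= max_value n rho eps t) /\
  (* attained at x_i = (-1)^(n-1-i), v_k = eps *)
  (exists x v : nat -> R,
     (forall i, (i < n)%N -> x i = (-1) ^+ (n - 1 - i)) /\
     (forall k, (n <= k)%N -> (k <= t)%N -> v k = eps) /\
     recur n rho x v t /\
     x t = max_value n rho eps t) /\
  (* alpha_n exists and the maximum is strictly below alpha_n + eps (1-rho)^(-n) *)
  (exists a, is_alpha_n rho n a) /\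
  (forall a, is_alpha_n rho n a ->
     max_value n rho eps t < a + eps * (1 - rho) ^- n).
Proof.
have hr0 : rho != 0 by rewrite gt_eqF.
have hS : \sum_(k < t.+1 | (n <= k <= t)%N) ('C(t - k + n - 1, n - 1))%:R * rho^+(t-k) * eps
    = eps * \sum_(n <= k < t.+1) ('C(t - k + n - 1, n - 1))%:R * rho ^+ (t - k).
  rewrite big_geq_mkord big_distrr /=.
  rewrite (eq_bigl (fun k : 'I_t.+1 => (n <= k)%N)); last first.
    by move=> k; have := ltn_ord k; rewrite ltnS => ->; rewrite andbT.
  by apply: eq_bigr => k _; rewrite mulrC.
split.
  move=> x v hx hv hr; rewrite (@sol R rho hrho0 n x v t hn hr) /max_value; apply: lerD.
    rewrite /gsol /alpha_kn; apply: ler_sum => i _.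
    have hi := ltn_ord i.
    rewrite -expfB; last by lia.
    apply: le_trans (ler_norm _) _; rewrite !normrM (ger0_norm (exprn_ge0 _ (ltW hrho0))).
    apply: ler_piMr; last exact: hx.
    by apply: mulr_ge0 => //; apply: exprn_ge0; exact: ltW.
  rewrite -hS /ysol; apply: ler_sum => k /andP [hk1 hk2].
  apply: ler_wpM2l.
    by apply: mulr_ge0 => //; apply: exprn_ge0; exact: ltW.
  exact: le_trans (ler_norm _) (hv _ hk1 hk2).
split.
  exists (fun m => gsol R rho n (fun i => (-1) ^+ (n - 1 - i)) m + ysol R rho n t (fun _ => eps) m).
  exists (fun _ => eps).
  split; first by move=> i hi; rewrite gsol_small // ysol_small // addr0.
  split; first by [].
  split; first exact: (@rec_sum R rho hrho0 n t).
  rewrite /max_value -hS; congr (_ + _).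
  rewrite /gsol /alpha_kn; apply: eq_bigr => i _.
  have hi := ltn_ord i.
  by rewrite -expfB; [rewrite mulrAC (@lagP_sign R rho hrho0 n i t hi ht) mulrC|lia].
split.
  set c : R := 3%:R ^+ n / (1 - rho).
  have hc : 0 <= c by apply: divr_ge0; [apply: exprn_ge0; lra | lra].
  set b := Num.Def.archi_bound c.
  have hb := archi_boundP hc; rewrite -/b in hb.
  have hmono : forall k, (n + b <= k)%N -> alpha_kn rho k.+1 n <= alpha_kn rho k n.
    move=> k hk; apply: (@alpha_step R rho hrho0 n k hn); first lia.
    set m : R := ((k - n).+1)%:R.
    have hm0 : 0 < m by rewrite ltr0n.
    have hbm : b%:R < m by rewrite ltr_nat; lia.
    have hcm : c < m by apply: lt_trans hbm.
    have h3 : 0 <= 3%:R ^+ n :> R by apply: exprn_ge0; lra.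
    set q := 3%:R ^+ n / m.
    have hq0 : 0 <= q by apply: divr_ge0 => //; exact: ltW.
    have hq1 : q < 1 - rho.
      rewrite /q ltr_pdivrMr // mulrC -ltr_pdivrMr ?subr_gt0 //.
    nra.
  have [k0 hk0 Hk0] := @eventually_max R (fun k => alpha_kn rho k n) n (n + b)%N (leq_addr _ _) hmono.
  exists (alpha_kn rho k0 n); split; first by exists k0.
  exact: Hk0.
move=> a [_ ha]; rewrite /max_value.
apply: ler_ltD; first exact: ha.
rewrite ltr_pM2l // reindex // -div1r ltr_pdivlMr; last first.
  by apply: exprn_gt0; rewrite subr_gt0.
have := @U_lt R rho hrho0 hrho1 (n - 1) (t - n).
by rewrite subn1 prednK.
Qed.
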